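(* Let $\mathfrak g$ be a complex vector space equipped with a bilinear multiplication $[\ ,\ ]:\mathfrak g\otimes\mathfrak g\to\mathfrak g$, and let $\tilde{\mathfrak g}=\mathfrak g\oplus\mathbb C$. For $\lambda\in\mathbb C$ define linear maps $\mathfrak R(\lambda),\mathfrak R(\lambda)':\tilde{\mathfrak g}\otimes\tilde{\mathfrak g}\to\tilde{\mathfrak g}\otimes\tilde{\mathfrak g}$ by $$\mathfrak R(\lambda)\big((x+\alpha)\otimes(y+\beta)\big)=(y+\beta)\otimes(x+\alpha)+[x,y]\otimes\lambda,$$ $$\mathfrak R(\lambda)'\big((x+\alpha)\otimes(y+\beta)\big)=(y+\beta)\otimes(x+\alpha)+\lambda\otimes[x,y],$$ for $x,y\in\mathfrak g$, $\alpha,\beta\in\mathbb C$ (here $\lambda$ and $[x,y]$ are regarded as elements of $\tilde{\mathfrak g}$ via $\mathbb C\subset\tilde{\mathfrak g}$ and $\mathfrak g\subset\tilde{\mathfrak g}$). Set $\mathfrak R_{12}(\lambda)=\mathfrak R(\lambda)\otimes 1_{\tilde{\mathfrak g}}$, $\mathfrak R_{23}(\lambda)=1_{\tilde{\mathfrak g}}\otimes\mathfrak R(\lambda)$, and similarly $\mathfrak R_{12}(\lambda)'=\mathfrak R(\lambda)'\otimes 1_{\tilde{\mathfrak g}}$, $\mathfrak R_{23}(\lambda)'=1_{\tilde{\mathfrak g}}\otimes\mathfrak R(\lambda)'$, as endomorphisms of $\tilde{\mathfrak g}^{\otimes 3}$. Then: (a) $\mathfrak R(\lambda)\mathfrak R(\lambda)'=\mathfrak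 R(\lambda)'\mathfrak R(\lambda)=1$ for every $\lambda\in\mathbb C$ if and only if $[\ ,\ ]$ is antisymmetric; (b) $\mathfrak R_{12}(\lambda)\mathfrak R_{23}(\lambda)\mathfrak R_{12}(\lambda)=\mathfrak R_{23}(\lambda)\mathfrak R_{12}(\lambda)\mathfrak R_{23}(\lambda)$ for every $\lambda\in\mathbb C$ if and only if $[\ ,\ ]$ satisfies the Jacobi identity; (c) $\mathfrak R_{12}(\lambda)'\mathfrak R_{23}(\lambda)'\mathfrak R_{12}(\lambda)'=\mathfrak R_{23}(\lambda)'\mathfrak R_{12}(\lambda)'\mathfrak R_{23}(\lambda)'$ for every $\lambda\in\mathbb C$ if and only if $[\ ,\ ]$ satisfies the Jacobi identity.
   Context: All tensor products are over $\mathbb C$. Elements of $\tilde{\mathfrak g}=\mathfrak g\oplus\mathbb C$ are written $x+\alpha$ with $x\in\mathfrak g$, $\alpha\in\mathbb C$. *)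

(* Defs.v *)
From HB Require Import structures.
From mathcomp Require Import all_boot all_order all_algebra.
From mathcomp Require Import complex.
From mathcomp Require Import Rstruct.
Set Implicit Arguments. Unset Strict Implicit. Unset Printing Implicit Defensive.
Import Order.TTheory GRing.Theory Num.Theory.
Local Open Scope ring_scope.

Definition CC : fieldType := (complex Rdefinitions.R : fieldType).

Definition bilinear_map (V W U : lmodType CC) (B : V -> W -> U) : Prop :=
  (forall (a : CC) (x x' : V) (y : W), B (a *: x + x') y = a *: B x y + B x' y) /\
  (forall (a : CC) (x : V) (y y' : W), B x (a *: y + y') = a *: B x y + B x y').

Definition trilinear_map (V U : lmodType CC) (T : V -> V -> V -> U) : Prop :=
  (forall (a : CC) x x' y z, T (a *: x + x') y z = a *: T x y z + T x' y z) /\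
  (forall (a : CC) x y y' z, T x (a *: y + y') z = a *: T x y z + T x y' z) /\
  (forall (a : CC) x y z z', T x y (a *: z + z') = a *: T x y z + T x y z').

(* g~ = g (+) C, as the product C-module  V * C. *)
Definition gt (V : lmodType CC) : lmodType CC := (V * (CC^o))%type.

(* Elements of g~ (x) g~ are represented by formal sums of pure tensors,
   i.e. sequences of pairs; two formal sums denote the same element of the
   tensor product iff every bilinear map takes the same value on them
   (universal property of the tensor product). *)
Definition tens2 (V : lmodType CC) := seq (gt V * gt V)%type.
Definition tens3 (V : lmodType CC) := seq (gt V * gt V * gt V)%type.

Definition teq2 (V : lmodType CC) (s t : tens2 V) : Prop :=
  forall (U : lmodType CC) (B : gt V -> gt V -> U), bilinear_map B ->
    \sum_(p <- s) B p.1 p.2 = \sum_(p <- t) B p.1 p.2.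

Definition teq3 (V : lmodType CC) (s t : tens3 V) : Prop :=
  forall (U : lmodType CC) (T : gt V -> gt V -> gt V -> U), trilinear_map T ->
    \sum_(p <- s) T p.1.1 p.1.2 p.2 = \sum_(p <- t) T p.1.1 p.1.2 p.2.

Definition opeq2 (V : lmodType CC) (f g : tens2 V -> tens2 V) : Prop :=
  forall s, teq2 (f s) (g s).
Definition opeq3 (V : lmodType CC) (f g : tens3 V -> tens3 V) : Prop :=
  forall s, teq3 (f s) (g s).

Section Rmaps.
Variables (V : lmodType CC) (br : V -> V -> V).

Definition ing (x : V) : gt V := (x, 0 : CC^o).
Definition inC (a : CC) : gt V := (0 : V, a : CC^o).

Definition Rpure (lam : CC) (u v : gt V) : tens2 V :=
  [:: (v, u); (ing (br u.1 v.1), inC lam)].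
Definition Rpure' (lam : CC) (u v : gt V) : tens2 V :=
  [:: (v, u); (inC lam, ing (br u.1 v.1))].

Definition ext2 (f : gt V -> gt V -> tens2 V) (s : tens2 V) : tens2 V :=
  flatten [seq f p.1 p.2 | p <- s].

Definition RR (lam : CC) := ext2 (Rpure lam).
Definition RR' (lam : CC) := ext2 (Rpure' lam).

Definition op12 (f : gt V -> gt V -> tens2 V) (s : tens3 V) : tens3 V :=
  flatten [seq [seq (q.1, q.2, p.2) | q <- f p.1.1 p.1.2] | p <- s].
Definition op23 (f : gt V -> gt V -> tens2 V) (s : tens3 V) : tens3 V :=
  flatten [seq [seq (p.1.1, q.1, q.2) | q <- f p.1.2 p.2] | p <- s].

Definition R12 (lam : CC) := op12 (Rpure lam).
Definition R23 (lam : CC) := op23 (Rpure lam).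
Definition R12' (lam : CC) := op12 (Rpure' lam).
Definition R23' (lam : CC) := op23 (Rpure' lam).
End Rmaps.

Definition antisymmetric_br (V : lmodType CC) (br : V -> V -> V) : Prop :=
  forall x y, br x y = - br y x.

Definition jacobi_left (V : lmodType CC) (br : V -> V -> V) : Prop :=
  forall x y z, br x (br y z) = br (br x y) z + br y (br x z).

Definition jacobi_right (V : lmodType CC) (br : V -> V -> V) : Prop :=
  forall x y z, br (br x y) z = br (br x z) y + br x (br y z).

(* Main.v *)
Require Import Defs.
From mathcomp Require Import all_boot all_algebra.
Local Open Scope ring_scope.
Import GRing.Theory.
Set Implicit Arguments.

Section S.
Variable V : lmodType CC.

Lemma big_ext2 (U : zmodType) f (s : tens2 V) (F : gt V * gt V -> U) :
  \sum_(p <- ext2 f s) F p = \sum_(p <- s) \sum_(q <- f p.1 p.2) F q.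
Proof. by rewrite /ext2 big_flatten big_map. Qed.

Lemma big_op12 (U : zmodType) f (s : tens3 V) (F : gt V * gt V * gt V -> U) :
  \sum_(t <- op12 f s) F t = \sum_(p <- s) \sum_(q <- f p.1.1 p.1.2) F (q.1, q.2, p.2).
Proof. rewrite /op12 big_flatten big_map; apply: eq_bigr => p _; by rewrite big_map. Qed.

Lemma big_op23 (U : zmodType) f (s : tens3 V) (F : gt V * gt V * gt V -> U) :
  \sum_(t <- op23 f s) F t = \sum_(p <- s) \sum_(q <- f p.1.2 p.2) F (p.1.1, q.1, q.2).
Proof. rewrite /op23 big_flatten big_map; apply: eq_bigr => p _; by rewrite big_map. Qed.

Lemma add0_gen (A B : zmodType) (f : A -> B) : (forall x y, f (x+y) = f x + f y) -> f 0 = 0.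
Proof. move=> h; have := h 0 0; rewrite addr0 => e.
have := congr1 (fun t => t - f 0) e; by rewrite addrK subrr. Qed.

Lemma ingD (a b : V) : ing (a + b) = ing a + ing b.
Proof. by rewrite /ing /=; congr pair; rewrite addr0. Qed.
Lemma ing0 : ing (0 : V) = 0. Proof. by []. Qed.
End S.
Section Z.
Variables (V W X U : lmodType CC).
Lemma bilD1 (B : V -> W -> U) : bilinear_map B -> forall x x' y, B (x + x') y = B x y + B x' y.
Proof. by case=> h _ x x' y; have := h 1 x x' y; rewrite !scale1r. Qed.
Lemma bilD2 (B : V -> W -> U) : bilinear_map B -> forall x y y', B x (y + y') = B x y + B x y'.
Proof. by case=> _ h x y y'; have := h 1 x y y'; rewrite !scale1r. Qed.
Lemma bil01 (B : V -> W -> U) : bilinear_map B -> forall y, B 0 y = 0.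
Proof. move=> h y; exact: (@add0_gen _ _ (fun x => B x y) (fun x x0 => bilD1 h x x0 y)). Qed.
Lemma bil02 (B : V -> W -> U) : bilinear_map B -> forall x, B x 0 = 0.
Proof. move=> h x; exact: (@add0_gen _ _ (fun y => B x y) (fun y y' => bilD2 h x y y')). Qed.
Lemma triD1 (T : V -> V -> V -> U) : trilinear_map T -> forall x x' y z, T (x + x') y z = T x y z + T x' y z.
Proof. by case=> h _ x x' y z; have := h 1 x x' y z; rewrite !scale1r. Qed.
Lemma triD2 (T : V -> V -> V -> U) : trilinear_map T -> forall x y y' z, T x (y + y') z = T x y z + T x y' z.
Proof. by case=> _ [h _] x y y' z; have := h 1 x y y' z; rewrite !scale1r. Qed.
Lemma triD3 (T : V -> V -> V -> U) : trilinear_map T -> forall x y z z', T x y (z + z') = T x y z + T x y z'.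
Proof. by case=> _ [_ h] x y z z'; have := h 1 x y z z'; rewrite !scale1r. Qed.
Lemma tri01 (T : V -> V -> V -> U) : trilinear_map T -> forall y z, T 0 y z = 0.
Proof. move=> h y z; exact: (@add0_gen _ _ (fun x => T x y z) (fun x x' => triD1 h x x' y z)). Qed.
Lemma tri02 (T : V -> V -> V -> U) : trilinear_map T -> forall x z, T x 0 z = 0.
Proof. move=> h x z; exact: (@add0_gen _ _ (fun y => T x y z) (fun y y' => triD2 h x y y' z)). Qed.
Lemma tri03 (T : V -> V -> V -> U) : trilinear_map T -> forall x y, T x y 0 = 0.
Proof. move=> h x y; exact: (@add0_gen _ _ (fun z => T x y z) (fun z z' => triD3 h x y z z')). Qed.
End Z.
Lemma ac6 (U : zmodType) (a b c d e f : U) : a + b + (c + d) + (e + f) = a + e + c + (b + (f + d)).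
Proof. rewrite -!addrA; congr (_ + _); rewrite [f + d]addrC (addrCA e c) (addrCA e b) (addrCA e d) (addrCA b c) //. Qed.
Lemma ac7 (U : zmodType) (a b c e f g : U) : a + b + c + (e + (f + g)) = a + e + (c + f) + (b + g).
Proof. rewrite -!addrA; congr (_ + _); by rewrite [in RHS](addrCA f b) [in RHS](addrCA c b) [in RHS](addrCA e b) [in RHS](addrCA e c). Qed.

Lemma big_pair (U : zmodType) (I : Type) (a b : I) (F : I -> U) :
  \sum_(q <- [:: a; b]) F q = F a + F b.
Proof. by rewrite big_cons big_seq1. Qed.

Lemma Bspec (V : lmodType CC) : bilinear_map (fun p q : gt V => q.2 *: p.1).
Proof. split=> a x x' y /=. by rewrite scalerDr !scalerA mulrC.
 by rewrite scalerDl scalerA. Qed.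
Lemma Tspec1 (V : lmodType CC) : trilinear_map (fun p q r : gt V => (q.2 * r.2) *: p.1).
Proof. split; [|split]=> a x y z w /=. by rewrite scalerDr !scalerA mulrC.
 by rewrite mulrDl scalerDl -mulrA scalerA.
 by rewrite mulrDr scalerDl mulrCA scalerA. Qed.
Lemma Tspec2 (V : lmodType CC) : trilinear_map (fun p q r : gt V => (p.2 * q.2) *: r.1).
Proof. split; [|split]=> a x y z w /=.
 by rewrite mulrDl scalerDl -mulrA scalerA.
 by rewrite mulrDr scalerDl mulrCA scalerA.
 by rewrite scalerDr !scalerA mulrC. Qed.

Lemma partA (V : lmodType CC) (br : V -> V -> V)
  (hbr : bilinear_map br) : ((forall lam : CC,
      opeq2 (fun s => RR br lam (RR' br lam s)) id /\
      opeq2 (fun s => RR' br lam (RR br lam s)) id) <-> antisymmetric_br br).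
Proof.
split.
  move=> H x y; have := (H 1).1 [:: (ing x, ing y)] V _ (@Bspec V).
  rewrite /RR /RR' /ext2 /Rpure /Rpure' /ing /inC /= !big_cons !big_nil /=.
  rewrite !scale0r !scale1r (bil01 hbr) !add0r !addr0 => /eqP.
  by rewrite addrC addr_eq0 => /eqP.
move=> hA lam; split=> s U B hB; rewrite /RR /RR' /= !big_ext2; apply: eq_bigr => -[u v] _;
 rewrite /Rpure /Rpure' !big_cons !big_nil /=.
  by rewrite (bil01 hbr) ing0 (bil01 hB) !addr0 (hA v.1) -addrA -(bilD1 hB) -ingD addNr ing0 (bil01 hB) addr0.
by rewrite (bil02 hbr) ing0 (bil02 hB) !addr0 (hA v.1) -addrA -(bilD2 hB) -ingD addNr ing0 (bil02 hB) addr0.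
Qed.

Lemma partB (V : lmodType CC) (br : V -> V -> V)
  (hbr : bilinear_map br) : (forall lam : CC,
      opeq3 (fun s => R12 br lam (R23 br lam (R12 br lam s)))
            (fun s => R23 br lam (R12 br lam (R23 br lam s)))) <-> jacobi_left br.
Proof.
split.
  move=> H x y z; have := H 1 [:: (ing x, ing y, ing z)] V _ (@Tspec1 V).
  rewrite /R12 /R23 /op12 /op23 /Rpure /ing /inC /= !big_cons !big_nil /=.
  rewrite !(mulr0, mul0r, mulr1, scale0r, scale1r, add0r, addr0, bil01 hbr, bil02 hbr).
  by move=> <-; rewrite addrC.
move=> hJ lam s U T hT; rewrite /R12 /R23 !(big_op12, big_op23); apply: eq_bigr => -[[u v] w] _;
 rewrite /Rpure !big_pair; cbn [fst snd].
rewrite !(bil01 hbr, bil02 hbr) !ing0 !(tri01 hT, tri02 hT, tri03 hT) !addr0 (hJ u.1 v.1 w.1) ingD (triD1 hT).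
by rewrite ac6.
Qed.

Lemma partC (V : lmodType CC) (br : V -> V -> V)
  (hbr : bilinear_map br) : (forall lam : CC,
      opeq3 (fun s => R12' br lam (R23' br lam (R12' br lam s)))
            (fun s => R23' br lam (R12' br lam (R23' br lam s)))) <-> jacobi_right br.
Proof.
split.
  move=> H x y z; have := H 1 [:: (ing x, ing y, ing z)] V _ (@Tspec2 V).
  rewrite /R12' /R23' /op12 /op23 /Rpure' /ing /inC /= !big_cons !big_nil /=.
  by rewrite !(mulr0, mul0r, mulr1, scale0r, scale1r, add0r, addr0, bil01 hbr, bil02 hbr).
move=> hJ lam s U T hT; rewrite /R12' /R23' !(big_op12, big_op23); apply: eq_bigr => -[[u v] w] _;
 rewrite /Rpure' !big_pair; cbn [fst snd].
rewrite !(bil01 hbr, bil02 hbr) !ing0 !(tri01 hT, tri02 hT, tri03 hT) !addr0 (hJ u.1 v.1 w.1) ingD (triD3 hT).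
by rewrite ac7.
Qed.

Theorem lemma1p1p1 (V : lmodType CC) (br : V -> V -> V)
  (hbr : bilinear_map br) :
  ((forall lam : CC,
      opeq2 (fun s => RR br lam (RR' br lam s)) id /\
      opeq2 (fun s => RR' br lam (RR br lam s)) id)
    <-> antisymmetric_br br) /\
  ((forall lam : CC,
      opeq3 (fun s => R12 br lam (R23 br lam (R12 br lam s)))
            (fun s => R23 br lam (R12 br lam (R23 br lam s))))
    <-> jacobi_left br) /\
  ((forall lam : CC,
      opeq3 (fun s => R12' br lam (R23' br lam (R12' br lam s)))
            (fun s => R23' br lam (R12' br lam (R23' br lam s))))
    <-> jacobi_right br).
Proof. split; [exact: partA | split; [exact: partB | exact: partC]]. Qed.
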